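(* Let $p$ be an odd prime, $q$ a power of $p$, and $n$ a nonnegative even integer with $p\nmid n$. If $F_n(1,x)$ is a permutation polynomial of $\mathbb{F}_q$, then $n\equiv 0\pmod 4$ and $\gcd\!\left(\lfloor\frac{n-1}{2}\rfloor,\,q-1\right)=1$.
   Context: For an integer $n\ge 1$, the $n$-th reversed Dickson polynomial of the third kind is $F_n(a,x)=\sum_{i=0}^{\lfloor n/2\rfloor}\frac{n-2i}{n-i}\binom{n-i}{i}(-x)^i a^{n-2i}$, where each coefficient $\frac{n-2i}{n-i}\binom{n-i}{i}$ is an integer (read in $\mathbb{F}_q$), and $F_0(a,x)=0$. A polynomial $f\in\mathbb{F}_q[x]$ is a permutation polynomial of $\mathbb{F}_q$ if $c\mapsto f(c)$ is a bijection of $\mathbb{F}_q$. *)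

(* Defs.v *)
From HB Require Import structures.
From mathcomp Require Import all_boot all_order all_algebra all_field.
Set Implicit Arguments. Unset Strict Implicit. Unset Printing Implicit Defensive.
Import GRing.Theory.
Local Open Scope ring_scope.

(* The integer coefficient (n-2i)/(n-i) * C(n-i, i), computed as an exact
   natural-number division (n - i >= 1 whenever n >= 1 and i <= n/2). *)
Definition rdt_coef (n i : nat) : nat :=
  ((n - i.*2) * 'C(n - i, i) %/ (n - i))%N.

Definition rev_dickson3 (R : nzRingType) (n : nat) (a : R) : {poly R} :=
  if n == 0%N then 0
  else \sum_(i < n./2.+1)
         ((rdt_coef n i)%:R * a ^+ (n - i.*2)) *: (- 'X) ^+ i.

Definition is_perm_poly (F : finFieldType) (f : {poly F}) : Prop :=
  bijective (fun c : F => f.[c]).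

(* Main.v *)
Require Import Defs.
From HB Require Import structures.
From mathcomp Require Import all_boot all_order all_algebra all_field.
From mathcomp Require Import fingroup pgroup.
From mathcomp Require Import ring zify.
Set Implicit Arguments. Unset Strict Implicit. Unset Printing Implicit Defensive.
Import GRing.Theory.
Local Open Scope ring_scope.

Section Seq.
Variable F : fieldType.

Fixpoint lp (x a b : F) (N : nat) : F * F :=
  match N with 0%N => (a, b) | N'.+1 => let uv := lp x a b N' in (uv.2, uv.2 - x * uv.1) end.
Definition Ys x a b N := (lp x a b N).1.
Definition E x N := Ys x 1 1 N.
Definition D x N := Ys x 2 1 N.

Lemma E_rec x N : E x N.+2 = E x N.+1 - x * E x N. Proof. by []. Qed.
Lemma D_rec x N : D x N.+2 = D x N.+1 - x * D x N. Proof. by []. Qed.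

Lemma rec_uniq x (f g : nat -> F) :
  (forall N, f N.+2 = f N.+1 - x * f N) -> (forall N, g N.+2 = g N.+1 - x * g N) ->
  f 0%N = g 0%N -> f 1%N = g 1%N -> forall N, f N = g N.
Proof.
move=> hf hg h0 h1.
suff H : forall N, f N = g N /\ f N.+1 = g N.+1 by move=> N; case: (H N).
elim=> [|N [e1 e2]]; first by split.
by split=> //; rewrite hf hg e1 e2.
Qed.

Lemma I1 x N : E x N.+2 = D x N.+2 + x * E x N.
Proof.
apply: (rec_uniq (f := fun N => E x N.+2) (g := fun N => D x N.+2 + x * E x N) (x := x)).
- by move=> M /=; rewrite !E_rec; ring.
- by move=> M /=; rewrite !E_rec !D_rec; ring.
- by rewrite /E /D /Ys /=; ring.
- by rewrite /E /D /Ys /=; ring.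
Qed.

Lemma I2 x N : D x N.+2 = (1 - 4 * x) * E x N + x * D x N.
Proof.
apply: (rec_uniq (f := fun N => D x N.+2) (g := fun N => (1 - 4 * x) * E x N + x * D x N) (x := x)).
- by move=> M /=; rewrite !D_rec; ring.
- by move=> M /=; rewrite !E_rec !D_rec; ring.
- by rewrite /E /D /Ys /=; ring.
- by rewrite /E /D /Ys /=; ring.
Qed.

Lemma recip x : 1 - 4 * x != 0 -> forall k,
  E (- x / (1 - 4 * x)) k.*2 * (1 - 4 * x) ^+ k = D x k.*2.+1 /\
  E (- x / (1 - 4 * x)) k.*2.+1 * (1 - 4 * x) ^+ k = E x k.*2.+1.
Proof.
set s := 1 - 4 * x; set x' := - x / s => s0.
have hx : x' * s = - x by rewrite /x' divfK.
elim=> [|k [e1 e2]]; first by rewrite /E /D /Ys /= !mulr1.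
have g1 : E x' k.+1.*2 * s ^+ k.+1 = D x k.+1.*2.+1.
  rewrite doubleS E_rec.
  have -> : (E x' k.*2.+1 - x' * E x' k.*2) * s ^+ k.+1
      = (E x' k.*2.+1 * s ^+ k) * s - (x' * s) * (E x' k.*2 * s ^+ k) by rewrite exprS; ring.
  by rewrite e1 e2 hx I2; rewrite -/s; ring.
split=> //.
rewrite doubleS E_rec -doubleS.
have -> : (E x' k.+1.*2 - x' * E x' k.*2.+1) * s ^+ k.+1
    = (E x' k.+1.*2 * s ^+ k.+1) - (x' * s) * (E x' k.*2.+1 * s ^+ k) by rewrite exprS; ring.
by rewrite g1 e2 hx doubleS I1; ring.
Qed.

Lemma E_at0 N : E 0 N = 1.
Proof.
apply: (rec_uniq (f := E 0) (g := fun _ => 1) (x := 0)).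
- by move=> M; rewrite E_rec; ring.
- by move=> M; ring.
- by [].
- by [].
Qed.

Lemma E_quarter x : 4 * x = 1 -> forall N, 2 ^+ N * E x N = N.+1%:R.
Proof.
move=> hx.
suff H : forall N, 2 ^+ N * E x N = N.+1%:R /\ 2 ^+ N.+1 * E x N.+1 = N.+2%:R.
  by move=> N; case: (H N).
elim=> [|N [e1 e2]]; first by rewrite /E /Ys /=; split; ring.
split=> //.
rewrite E_rec.
have -> : 2 ^+ N.+2 * (E x N.+1 - x * E x N) =
   2 * (2 ^+ N.+1 * E x N.+1) - (4 * x) * (2 ^+ N * E x N) by rewrite !exprS; ring.
rewrite e1 e2 hx !mulrSr; ring.
Qed.

Lemma E_half x : 2 * x = 1 -> forall N, 4 * E x N.+4 = - E x N.
Proof.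
move=> hx N; rewrite !E_rec.
transitivity (4 * (1 - 2 * x) * E x N.+1 + ((2 * x) ^+ 2 - 2 * (2 * x)) * E x N); first ring.
by rewrite hx subrr; ring.
Qed.

Lemma E_half_odd x : 2 * x = 1 -> forall j, 4 ^+ j * E x (4 * j).+1 = (-1) ^+ j.
Proof.
move=> hx; elim=> [|j IH]; first by rewrite /E /Ys /= mulr1.
have -> : (4 * j.+1).+1 = ((4 * j).+1).+4 by lia.
by rewrite exprS -mulrA mulrCA E_half // mulrN IH exprS mulN1r.
Qed.

End Seq.

Section Bridge.
Variable F : fieldType.
Implicit Types x : F.

Lemma hl N : N = (odd N + 2 * N./2)%N.
Proof. by rewrite mul2n odd_double_half. Qed.

Definition S K N x := \sum_(i < K) ('C(N - i, i))%:R * (- x) ^+ i.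

Lemma Sext N K x : (N./2 < K)%N -> S K.+1 N x = S K N x.
Proof.
move=> h; rewrite /S big_ord_recr /= bin_small ?mul0r ?addr0 //.
have := hl N; case: (odd N) => /=; lia.
Qed.

Lemma Slarge N K1 K2 x : (N./2 < K1)%N -> (K1 <= K2)%N -> S K2 N x = S K1 N x.
Proof.
move=> h1 /subnK <-; elim: (K2 - K1)%N => [|d IH]; first by rewrite add0n.
by rewrite addSn Sext ?IH //; apply: leq_trans h1 _; rewrite leq_addl.
Qed.

Lemma Srec N K x : (N./2 < K)%N -> S K.+1 N.+2 x = S K.+1 N.+1 x - x * S K.+1 N x.
Proof.
move=> h; rewrite [S K.+1 N x]Sext // /S. rewrite !big_ord_recl /= !subn0 !bin0.
have pas : forall i : 'I_K, ('C(N.+2 - bump 0 i, bump 0 i))%:R * (- x) ^+ bump 0 i =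
  ('C(N.+1 - bump 0 i, bump 0 i))%:R * (- x) ^+ bump 0 i + (- x) * (('C(N - i, i))%:R * (- x) ^+ i) :> F.
  move=> i; rewrite /bump /= add1n subSS exprS.
  have -> : 'C(N.+1 - i, i.+1) = ('C(N - i, i.+1) + 'C(N - i, i))%N.
    case: (leqP i N) => hi; first by rewrite subSn // binS.
    have -> : (N.+1 - i = 0)%N by lia.
    have -> : (N - i = 0)%N by lia.
    by rewrite !bin0n /=; move: hi; case: (nat_of_ord i).
  rewrite natrD; ring.
rewrite (eq_bigr _ (fun i _ => pas i)) big_split /= -mulr_sumr; ring.
Qed.

Definition Cf N x := S N.+1 N x.

Lemma E_closed x N : E x N = Cf N x.
Proof.
apply: (rec_uniq (f := E x) (g := fun N => Cf N x) (x := x)).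
- by move=> M; rewrite E_rec.
- move=> M; rewrite /Cf Srec; last by have := hl M; case: (odd M) => /=; lia.
  rewrite (@Slarge M.+1 M.+2 M.+3); last by []; last by have := hl M.+1; case: (odd M.+1) => /=; lia.
  by rewrite (@Slarge M M.+1 M.+3) //; have := hl M; case: (odd M) => /=; lia.
- by rewrite /Cf /S big_ord_recl big_ord0 /= addr0 mulr1.
- by rewrite /Cf /S !big_ord_recl big_ord0 /= addr0 !bin0n /= mul0r addr0 mulr1.
Qed.

Lemma rdt_coefE n i : (i < n)%N -> rdt_coef n i = 'C(n.-1 - i, i).
Proof.
move=> hi; rewrite /rdt_coef.
have -> : (n - i.*2 = (n - i) - i)%N by rewrite -addnn; lia.
have -> : (n.-1 - i = (n - i).-1)%N by lia.
rewrite -mul_bin_down mulKn //; lia.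
Qed.

Lemma bridge m x : (0 < m)%N -> (rev_dickson3 m.*2 (1 : F)).[x] = E x m.*2.-1.
Proof.
move=> m0; rewrite /rev_dickson3.
have -> : (m.*2 == 0%N) = false by rewrite double_eq0; case: m m0.
rewrite horner_sum doubleK.
rewrite E_closed /Cf.
have hn : (m.*2.-1).+1 = m.*2 by rewrite prednK // double_gt0.
rewrite hn (@Slarge m.*2.-1 m.+1 m.*2 x); last by rewrite -addnn; lia.
  rewrite /S; apply: eq_bigr => i _.
  rewrite !hornerE expr1n mulr1 rdt_coefE //.
  by have := ltn_ord i; rewrite -addnn; lia.
have := hl (m.*2.-1); rewrite -addnn; case: (odd _) => /=; lia.
Qed.

End Bridge.

Theorem theorem3p3 (F : finFieldType) (p n : nat) :
  prime p -> odd p -> p \in [pchar F] ->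
  ~~ odd n -> ~~ (p %| n)%N ->
  is_perm_poly (rev_dickson3 n (1 : F)) ->
  (4 %| n)%N /\ gcdn (n.-1)./2 (#|F|.-1) = 1%N.
Proof.
move=> pp podd pc nev pn [g fK gK].
have inj : injective (fun c : F => (rev_dickson3 n 1).[c]) := can_inj fK.
have two0 : (2%:R : F) != 0.
  rewrite -(dvdn_pcharf pc) (dvdn_prime2 pp) //; apply/eqP => e; by rewrite e in podd.
have four0 : (4%:R : F) != 0.
  have -> : (4%:R : F) = 2%:R * 2%:R by rewrite -natrM.
  by rewrite mulf_neq0.
set m := n./2.
have nE : n = m.*2 by rewrite /m halfK (negbTE nev) subn0.
have [m0|mpos] := posnP m.
  exfalso; move: (@inj 0 1) => /=.
  rewrite nE m0 /rev_dickson3 /= !horner0 => /(_ erefl) /eqP.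
  by rewrite eq_sym oner_eq0.
have PE : forall c : F, (rev_dickson3 n 1).[c] = E c n.-1.
  by move=> c; rewrite nE; apply: bridge.
have NE : n.-1 = (m.-1).*2.+1 by rewrite nE -!addnn; lia.
have Ebig : forall x : F, 1 - 4%:R * x = 0 -> E x n.-1 != 0.
  move=> x hx; have hx' : 4%:R * x = 1 by apply/eqP; rewrite eq_sym -subr_eq0 hx.
  apply/negP => /eqP h0; move: (E_quarter hx' n.-1); rewrite h0 mulr0.
  rewrite prednK ?nE ?double_gt0 // -nE => /esym /eqP; rewrite -(dvdn_pcharf pc).
  by apply/negP.
have mev : ~~ odd m.
  apply/negP => mo.
  set x0 := g 0.
  have h0 : E x0 n.-1 = 0 by rewrite -PE /x0 gK.
  have s0 : 1 - 4%:R * x0 != 0 by apply/eqP => /Ebig; rewrite h0 eqxx.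
  have [_ r] := recip s0 (m.-1).
  move: r; rewrite -NE h0 => /eqP; rewrite mulf_eq0 expf_eq0 (negbTE s0) andbF orbF => /eqP h1.
  have ex : - x0 / (1 - 4%:R * x0) = x0 by apply: inj => /=; rewrite !PE h1 h0.
  have ex2 : x0 * (1 - 4%:R * x0) = - x0 by rewrite -{1}ex divfK.
  have : 2%:R * (x0 * (2%:R * x0 - 1)) = 0.
    transitivity (- (x0 * (1 - 4%:R * x0) + x0)); first ring.
    by rewrite ex2 addNr oppr0.
  move/eqP; rewrite !mulf_eq0 (negbTE two0) /= => /orP [/eqP x00|].
    by move: h0; rewrite x00 E_at0 => /eqP; rewrite oner_eq0.
  rewrite subr_eq0 => /eqP hx.
  move: mo; rewrite -[m]odd_double_half => /[dup] mo; rewrite mo /= => _.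
  have NE2 : n.-1 = (4 * m./2).+1 by rewrite NE -!addnn; lia.
  move: (E_half_odd hx m./2); rewrite -NE2 h0 mulr0 => /eqP.
  by rewrite eq_sym signr_eq0.
split.
  apply/dvdnP; exists m./2; move: (hl m); rewrite (negbTE mev) nE -!addnn /=; lia.
have dE : (n.-1)./2 = m.-1 by rewrite NE -!addnn; have := hl (m.-1 + m.-1).+1; case: odd => /=; lia.
rewrite dE; set d := m.-1.
have dodd : odd d.
  have := hl m; rewrite (negbTE mev) /d /= => hm.
  have -> : m.-1 = (2 * (m./2).-1).+1 by lia.
  by rewrite /= oddM.
apply/eqP; apply/negPn/negP => hG.
set G := gcdn d #|F|.-1.
have qpos : (0 < #|F|.-1)%N by rewrite -card_finField_unit (cardG_gt0 [set: {unit F}]%G).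
have G1 : (1 < G)%N.
  have : (0 < G)%N by rewrite gcdn_gt0 qpos orbT.
  by move: hG; rewrite -/G; lia.
set l := pdiv G.
have lp : prime l by apply: pdiv_prime.
have ld : (l %| d)%N := dvdn_trans (pdiv_dvd G) (dvdn_gcdl _ _).
have lq : (l %| #|F|.-1)%N := dvdn_trans (pdiv_dvd G) (dvdn_gcdr _ _).
have lodd : odd l.
  apply/negPn/negP => le; move: dodd; rewrite -dvdn2 in le.
  by rewrite -[odd d]negbK -dvdn2 (dvdn_trans le ld).
have lU : (l %| #|[set: {unit F}]%G|)%N by rewrite card_finField_unit.
have [u _ ou] := @Cauchy _ _ [set: {unit F}]%G lp lU.
set z := FinRing.uval u.
have zl : z ^+ l = 1 by rewrite /z -FinRing.val_unitX -ou expg_order.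
have z1 : z != 1.
  apply/eqP => e; have : u = 1%g by apply: val_inj; rewrite /= -/z e.
  by move=> u1; move: ou; rewrite u1 order1 => l1; rewrite -l1 in lp.
have z2 : z ^+ 2 != 1.
  apply/eqP => e; move: zl; have := hl l; rewrite lodd => -> /=.
  by rewrite add1n exprS exprM e expr1n mulr1 => /eqP; rewrite (negbTE z1).
have zd : z ^+ d = 1.
  by case/dvdnP: ld => t ->; rewrite mulnC exprM zl expr1n.
have z0 : z != 0.
  apply/eqP => e; move: zl; rewrite e expr0n eqn0Ngt (prime_gt0 lp) /= => /eqP.
  by rewrite eq_sym oner_eq0.
set x1 := (1 - z) / 4%:R.
have s1 : 1 - 4%:R * x1 = z by rewrite /x1 mulrC divfK // opprB addrC subrK.
have s1' : 1 - 4%:R * x1 != 0 by rewrite s1.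
have [_ h0'] := recip s1' d.
move: h0'; rewrite s1 zd mulr1 -NE => h.
have ex : - x1 / z = x1.
  by apply: inj => /=; rewrite !PE h.
have : x1 * (1 + z) = 0.
  have ex2 : x1 * z = - x1 by rewrite -{1}ex divfK.
  by rewrite mulrDr mulr1 ex2 subrr.
move/eqP; rewrite mulf_eq0 => /orP [|].
  rewrite /x1 mulf_eq0 invr_eq0 (negbTE four0) orbF subr_eq0 eq_sym.
  by rewrite (negbTE z1).
by rewrite addrC addr_eq0 => /eqP e; move: z2; rewrite e sqrrN expr1n eqxx.
Qed.
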